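(* In the MHAV setting described in the context, with $Y$, $f$, $\Lambda$ and $\phi_Y$ fixed, the set of paths of positive probability under $\bar P_{\mathrm{MH}}$ is the same for all parameter values $\alpha'\in(0,1)$ and $\alpha,\beta\in(0,1)$ with $\alpha+\beta<1$.
   Context: MHAV setting: $Y$ is a finite nonempty set, $f:Y\to\mathbb{R}$; $\Lambda=\{\lambda_1<\dots<\lambda_n\}$ positive reals, $n\ge2$; $\bar\Pi(\lambda,y)=\lambda^{-f(y)}/Z$ on $\Lambda\times Y$, $Z=\sum_{\lambda,y}\lambda^{-f(y)}$. $\phi_Y$ is an irreducible Markov kernel on $Y$. For $\alpha'\in(0,1)$: $\phi_\Lambda(\lambda_1,\lambda_2)=1$, $\phi_\Lambda(\lambda_n,\lambda_{n-1})=1$, and for $1<i<n$, $\phi_\Lambda(\lambda_i,\lambda_{i+1})=\alpha'$, $\phi_\Lambda(\lambda_i,\lambda_{i-1})=1-\alpha'$, other entries $0$. $\bar\phi[(\lambda,y),(\lambda',y')]=\alpha\phi_\Lambda(\lambda,\lambda')$ if $\lambda\ne\lambda',y=y'$; $\beta\phi_Y(y,y')$ if $\lambda=\lambda',y\ne y'$; $(1-\alpha-\beta)+\beta\phi_Y(y,y)$ if $(\lambda,y)=(\lambda',y')$; $0$ otherwise. $\bar{\mathsf{Acc}}(x,x')=\min\{1,\frac{\bar\phi(x',x)\bar\Pi(x')}{\bar\phi(x,x')\bar\Pi(x)}\}$; $\bar P_{\mathrm{MH}}(x,x')=\bar\phi(x,x')\bar{\mathsf{Acc}}(x,x')$ for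 $x\ne x'$, $\bar P_{\mathrm{MH}}(x,x)=1-\sum_{x'\ne x}\bar P_{\mathrm{MH}}(x,x')$. A path is a finite sequence $x_0,x_1,\dots,x_m$ in $\Lambda\times Y$; its probability is $\prod_{i=0}^{m-1}\bar P_{\mathrm{MH}}(x_i,x_{i+1})$. *)

(* Defs.v *)
From HB Require Import structures.
From mathcomp Require Import all_boot all_order all_algebra.
From mathcomp Require Import reals exp.
Set Implicit Arguments. Unset Strict Implicit. Unset Printing Implicit Defensive.
Import Order.TTheory GRing.Theory Num.Theory.
Local Open Scope ring_scope.

Section MHAV.
Variables (R : realType) (Y : finType) (n : nat).

(* state space Lambda x Y, Lambda indexed by 'I_n: lam i = lambda_(i+1) *)
Definition XS := ('I_n * Y)%type.

Definition markov_kernel (phi : Y -> Y -> R) : Prop :=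
  (forall y y', 0 <= phi y y') /\ (forall y, \sum_(y' : Y) phi y y' = 1).
Definition irreducible (phi : Y -> Y -> R) : Prop :=
  forall y y', exists s : seq Y,
    path (fun a b => 0 < phi a b) y s /\ last y s = y'.

Definition Zc (lam : 'I_n -> R) (f : Y -> R) : R :=
  \sum_(x : XS) powR (lam x.1) (- f x.2).
Definition Pibar (lam : 'I_n -> R) (f : Y -> R) (x : XS) : R :=
  powR (lam x.1) (- f x.2) / Zc lam f.

Definition phiL (a' : R) (i j : 'I_n) : R :=
  if val i == 0%N then (if val j == 1%N then 1 else 0)
  else if val i == n.-1 then (if val j == n.-2 then 1 else 0)
  else if val j == (val i).+1 then a'
  else if (val j).+1 == val i then 1 - a'
  else 0.

Definition phibar (a b a' : R) (phiY : Y -> Y -> R) (x x' : XS) : R :=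
  if (x.1 != x'.1) && (x.2 == x'.2) then a * phiL a' x.1 x'.1
  else if (x.1 == x'.1) && (x.2 != x'.2) then b * phiY x.2 x'.2
  else if x == x' then (1 - a - b) + b * phiY x.2 x.2
  else 0.

Definition Acc (lam : 'I_n -> R) (f : Y -> R) (a b a' : R) (phiY : Y -> Y -> R)
  (x x' : XS) : R :=
  Num.min 1 ((phibar a b a' phiY x' x * Pibar lam f x') /
             (phibar a b a' phiY x x' * Pibar lam f x)).

Definition Poff (lam : 'I_n -> R) (f : Y -> R) (a b a' : R) (phiY : Y -> Y -> R)
  (x x' : XS) : R :=
  phibar a b a' phiY x x' * Acc lam f a b a' phiY x x'.

Definition PMH (lam : 'I_n -> R) (f : Y -> R) (a b a' : R) (phiY : Y -> Y -> R)
  (x x' : XS) : R :=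
  if x != x' then Poff lam f a b a' phiY x x'
  else 1 - \sum_(z : XS | z != x) Poff lam f a b a' phiY x z.

Fixpoint path_prob (lam : 'I_n -> R) (f : Y -> R) (a b a' : R)
  (phiY : Y -> Y -> R) (x0 : XS) (s : seq XS) : R :=
  match s with
  | [::] => 1
  | x1 :: s' => PMH lam f a b a' phiY x0 x1 * path_prob lam f a b a' phiY x1 s'
  end.

Definition good_params (a b a' : R) : Prop :=
  [/\ 0 < a' < 1, 0 < a < 1, 0 < b < 1 & a + b < 1].

End MHAV.

(* Main.v *)
Require Import Defs.
From HB Require Import structures.
From mathcomp Require Import all_boot all_order all_algebra.
From mathcomp Require Import reals exp.
From mathcomp Require Import zify lra.
Set Implicit Arguments. Unset Strict Implicit. Unset Printing Implicit Defensive.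
Import Order.TTheory GRing.Theory Num.Theory.
Local Open Scope ring_scope.

Section P.
Variables (R : realType) (n : nat).

Lemma sum_if1 (k : nat) (c : R) : (k < n)%N ->
  \sum_(j : 'I_n) (if val j == k then c else 0) = c.
Proof.
move=> hk; rewrite -big_mkcond /= (big_pred1 (Ordinal hk)) // => j /=.
Qed.

Lemma phiL_ge0 (a' : R) (i j : 'I_n) : 0 <= a' <= 1 -> 0 <= phiL a' i j.
Proof.
move=> /andP[h0 h1]; rewrite /phiL.
by repeat case: ifP => _; rewrite ?ler01 ?lexx ?subr_ge0.
Qed.

Lemma phiL_pos (a1 a2 : R) (i j : 'I_n) : 0 < a1 < 1 -> 0 < a2 < 1 ->
  (0 < phiL a1 i j) = (0 < phiL a2 i j).
Proof.
move=> /andP[h1 h2] /andP[h3 h4]; rewrite /phiL.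
by repeat case: ifP => _; rewrite ?subr_gt0 ?h1 ?h2 ?h3 ?h4.
Qed.

Lemma phiL_ii (a' : R) (i : 'I_n) : phiL a' i i = 0.
Proof.
rewrite /phiL; case: ifP => h1; first by case: ifP => h2 //; lia.
case: ifP => h2; first by case: ifP => h3 //; lia.
case: ifP => h3; first lia.
case: ifP => h4 //; lia.
Qed.

Lemma phiL_sum (a' : R) (i : 'I_n) : (2 <= n)%N -> \sum_j phiL a' i j = 1.
Proof.
move=> hn; case: i => i hi; rewrite /phiL /=.
case h1 : (i == 0%N); first by apply: sum_if1.
case h2 : (i == n.-1); first by apply: sum_if1; lia.
transitivity (\sum_(j : 'I_n) ((if val j == i.+1 then a' else 0)
   + (if val j == i.-1 then 1 - a' else 0))); last first.
  rewrite big_split /= !sum_if1; first lra.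
    by lia.
  by lia.
apply: eq_bigr => j _ /=; case h3: (val j == i.+1); case h4: ((val j).+1 == i);
  case h5: (val j == i.-1);
  rewrite ?addr0 ?add0r //; exfalso; lia.
Qed.
End P.
Section Q.
Variables (R : realType) (Y : finType) (n : nat) (phiY : Y -> Y -> R).
Hypothesis (hn : (2 <= n)%N) (mk : markov_kernel phiY).

Lemma phiY_ge0 y y' : 0 <= phiY y y'. Proof. by case: mk. Qed.

Lemma phibar_ge0 a b a' (x z : XS Y n) : good_params a b a' -> 0 <= phibar a b a' phiY x z.
Proof.
case=> /andP[h1 h2] /andP[h3 h4] /andP[h5 h6] h7; rewrite /phibar.
have := phiY_ge0 x.2 z.2; have := phiY_ge0 x.2 x.2.
have : 0 <= phiL a' x.1 z.1 by apply: phiL_ge0; rewrite ltW // ltW.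
move=> p1 p2 p3.
have q1 : 0 <= a * phiL a' x.1 z.1 by apply: mulr_ge0; rewrite // ltW.
have q2 : 0 <= b * phiY x.2 z.2 by apply: mulr_ge0; rewrite // ltW.
have q3 : 0 <= b * phiY x.2 x.2 by apply: mulr_ge0; rewrite // ltW.
repeat case: ifP => _; rewrite ?lexx //; lra.
Qed.

Lemma phibar_xx a b a' (x : XS Y n) : good_params a b a' -> 0 < phibar a b a' phiY x x.
Proof.
case=> /andP[h1 h2] /andP[h3 h4] /andP[h5 h6] h7; rewrite /phibar !eqxx /=.
have := phiY_ge0 x.2 x.2 => p; have := mulr_ge0 (ltW h5) p.
lra.
Qed.

Lemma phibar_pos a1 b1 a1' a2 b2 a2' (x z : XS Y n) :
  good_params a1 b1 a1' -> good_params a2 b2 a2' ->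
  (0 < phibar a1 b1 a1' phiY x z) = (0 < phibar a2 b2 a2' phiY x z).
Proof.
move=> g1 g2; move: (g1) (g2).
case=> /andP[h1 h2] /andP[h3 h4] /andP[h5 h6] h7.
case=> /andP[k1 k2] /andP[k3 k4] /andP[k5 k6] k7.
rewrite /phibar; case: ifP => _.
  by rewrite !pmulr_rgt0 //; apply: phiL_pos; apply/andP.
case: ifP => _; first by rewrite !pmulr_rgt0.
case: ifP => /eqP e; last by rewrite ltxx.
by subst z; move: (phibar_xx x g1) (phibar_xx x g2); rewrite /phibar !eqxx /= => -> ->.
Qed.

Lemma phibar_sum a b a' (x : XS Y n) : \sum_z phibar a b a' phiY x z = 1.
Proof.
case: x => i0 y0.
have inner i : \sum_y phibar a b a' phiY (i0, y0) (i, y) =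
   (if i == i0 then 1 - a else 0) + a * phiL a' i0 i.
  rewrite /phibar /=; case: (eqVneq i i0) => [->|hi] /=.
    rewrite phiL_ii mulr0 addr0.
    transitivity (\sum_y ((if y == y0 then 1-a-b else 0) + b * phiY y0 y)).
      apply: eq_bigr => y _; case: (eqVneq y0 y) => [<-|hy] /=.
        by rewrite !eqxx /= addrC.
      by rewrite add0r.
    rewrite big_split /= -big_mkcond big_pred1_eq -mulr_sumr.
    by case: mk => _ ->; rewrite mulr1 addrNK.
  rewrite add0r.
  transitivity (\sum_y (if y == y0 then a * phiL a' i0 i else 0)).
    apply: eq_bigr => y _; rewrite xpair_eqE (eq_sym i0) (negbTE hi) /=.
    by rewrite eq_sym.
  by rewrite -big_mkcond big_pred1_eq.
rewrite -(pair_bigA _ (fun i y => phibar a b a' phiY (i0, y0) (i, y))) /=.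
rewrite (eq_bigr _ (fun i _ => inner i)) big_split /= -big_mkcond big_pred1_eq.
by rewrite -mulr_sumr phiL_sum // mulr1 subrK.
Qed.
End Q.
Section S.
Variables (R : realType) (Y : finType) (n : nat) (phiY : Y -> Y -> R)
  (lam : 'I_n -> R) (f : Y -> R).
Hypothesis (hn : (2 <= n)%N) (mk : markov_kernel phiY) (hlam : forall i, 0 < lam i).

Lemma Pibar_gt0 (x : XS Y n) : 0 < Pibar lam f x.
Proof.
rewrite /Pibar divr_gt0 ?powR_gt0 // /Zc (bigD1 x) //=.
have : 0 <= \sum_(z | z != x) powR (lam z.1) (- f z.2).
  by apply: sumr_ge0 => z _; apply/ltW/powR_gt0.
have := powR_gt0 (- f x.2) (hlam x.1); lra.
Qed.

Lemma Poff_ge0 a b a' (x z : XS Y n) : good_params a b a' ->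
  0 <= Poff lam f a b a' phiY x z.
Proof.
move=> g; rewrite /Poff /Acc; apply: mulr_ge0; first exact: phibar_ge0.
rewrite le_min ler01 /=; apply: divr_ge0; apply: mulr_ge0;
  by [apply: phibar_ge0 | apply/ltW/Pibar_gt0].
Qed.

Lemma Poff_le a b a' (x z : XS Y n) : good_params a b a' ->
  Poff lam f a b a' phiY x z <= phibar a b a' phiY x z.
Proof.
move=> g; rewrite /Poff /Acc; apply: ler_piMr; first exact: phibar_ge0.
by rewrite ge_min lexx.
Qed.

Lemma Poff_pos a b a' (x z : XS Y n) : good_params a b a' ->
  0 < Poff lam f a b a' phiY x z <->
  0 < phibar a b a' phiY x z /\ 0 < phibar a b a' phiY z x.
Proof.
move=> g; rewrite /Poff /Acc.
have := phibar_ge0 mk x z g; rewrite le_eqVlt => /orP[/eqP <-|hp].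
  by rewrite mul0r ltxx; split => // -[].
rewrite pmulr_rgt0 // lt_min ltr01 /= mulrC pmulr_rgt0; last first.
  by rewrite invr_gt0 mulr_gt0 // Pibar_gt0.
rewrite pmulr_lgt0 ?Pibar_gt0 //; by split => [->|[]].
Qed.

Lemma PMH_diag a b a' (x : XS Y n) : good_params a b a' ->
  0 < PMH lam f a b a' phiY x x.
Proof.
move=> g; rewrite /PMH eqxx /= subr_gt0.
have tot := phibar_sum hn mk a b a' x; rewrite (bigD1 x) //= in tot.
have : \sum_(z | z != x) Poff lam f a b a' phiY x z <=
       \sum_(z | z != x) phibar a b a' phiY x z.
  by apply: ler_sum => z _; apply: Poff_le.
have := phibar_xx mk x g; lra.
Qed.

Lemma PMH_ge0 a b a' (x z : XS Y n) : good_params a b a' ->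
  0 <= PMH lam f a b a' phiY x z.
Proof.
move=> g; case: (eqVneq x z) => [<-|h]; first exact/ltW/PMH_diag.
by rewrite /PMH h; apply: Poff_ge0.
Qed.

Lemma PMH_iff a1 b1 a1' a2 b2 a2' (x z : XS Y n) :
  good_params a1 b1 a1' -> good_params a2 b2 a2' ->
  0 < PMH lam f a1 b1 a1' phiY x z <-> 0 < PMH lam f a2 b2 a2' phiY x z.
Proof.
move=> g1 g2; case: (eqVneq x z) => [<-|h].
  by rewrite !PMH_diag.
rewrite /PMH h !Poff_pos // (phibar_pos mk x z g1 g2) (phibar_pos mk z x g1 g2).
by [].
Qed.

Lemma path_prob_ge0 a b a' x0 s : good_params a b a' ->
  0 <= path_prob lam f a b a' phiY x0 s.
Proof.
move=> g; elim: s x0 => [|x s IH] x0 /=; first exact: ler01.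
by apply: mulr_ge0; [apply: PMH_ge0|apply: IH].
Qed.

Lemma mul_pos_iff (u v : R) : 0 <= u -> 0 <= v -> 0 < u * v <-> 0 < u /\ 0 < v.
Proof.
move=> hu hv; rewrite !lt0r mulf_eq0 negb_or mulr_ge0 // hu hv !andbT.
by split => [/andP[]|[-> ->]].
Qed.
End S.

Theorem corollary18 (R : realType) (Y : finType) (y0 : Y) (f : Y -> R)
  (n : nat) (lam : 'I_n -> R) (phiY : Y -> Y -> R) :
  (2 <= n)%N ->
  (forall i, 0 < lam i) ->
  (forall i j : 'I_n, (i < j)%N -> lam i < lam j) ->
  markov_kernel phiY -> irreducible phiY ->
  forall (a1 b1 a1' a2 b2 a2' : R),
  good_params a1 b1 a1' -> good_params a2 b2 a2' ->
  forall (x0 : XS Y n) (s : seq (XS Y n)),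
    0 < path_prob lam f a1 b1 a1' phiY x0 s <->
    0 < path_prob lam f a2 b2 a2' phiY x0 s.
Proof.
move=> hn hlam _ mk _ a1 b1 a1' a2 b2 a2' g1 g2 x0 s.
elim: s x0 => [|x s IH] x0 /=; first by [].
rewrite !mul_pos_iff; try by [apply: PMH_ge0 | apply: path_prob_ge0].
have H := @PMH_iff R Y n phiY lam f hn mk hlam _ _ _ _ _ _ x0 x g1 g2.
by split=> -[h1 h2]; split; [apply/H|apply/IH|apply/H|apply/IH].
Qed.
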